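(* Let $A$ be the adjacency matrix (entries in $\{0,1\}$, $A_{ij}=1$ iff there is an edge from $j$ to $i$) of a directed graph with $N$ vertices and $M\ge 1$ edges. Let $k_{\max}$ be the maximum among all in-degrees $k_i^{\mathrm{in}}=\sum_j A_{ij}$ and out-degrees $k_j^{\mathrm{out}}=\sum_i A_{ij}$ of the graph. Then \[\mathrm{srank}(A)\le \frac{M}{k_{\max}}.\]
   Context: The stable rank of a nonzero matrix $A$ is $\mathrm{srank}(A)=\|A\|_F^2/\|A\|_2^2=\sum_i\sigma_i^2/\sigma_1^2$, where $\sigma_1\ge\sigma_2\ge\cdots$ are the singular values of $A$, $\|\cdot\|_F$ is the Frobenius norm and $\|\cdot\|_2$ the spectral norm. *)

(* Defs.v *)
From HB Require Import structures.
From mathcomp Require Import all_boot all_order all_algebra.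
From mathcomp Require Import classical_sets reals.
Set Implicit Arguments. Unset Strict Implicit. Unset Printing Implicit Defensive.
Import Order.TTheory GRing.Theory Num.Theory.
Local Open Scope classical_set_scope.
Local Open Scope ring_scope.

Definition vnorm (R : realType) (n : nat) (x : 'cV[R]_n) : R :=
  Num.sqrt (\sum_(i < n) x i 0 ^+ 2).

Definition frob2 (R : realType) (m n : nat) (A : 'M[R]_(m, n)) : R :=
  \sum_(i < m) \sum_(j < n) A i j ^+ 2.

(* spectral norm = largest singular value = operator norm induced by the
   Euclidean norm *)
Definition specnorm (R : realType) (m n : nat) (A : 'M[R]_(m, n)) : R :=
  sup [set vnorm (A *m x) | x in [set x : 'cV[R]_n | vnorm x = 1]].

Definition srank (R : realType) (m n : nat) (A : 'M[R]_(m, n)) : R :=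
  frob2 A / specnorm A ^+ 2.

(* Directed graph on vertices 'I_N given by an edge relation:
   E j i means there is an edge from j to i. *)
Definition adjmx (R : realType) (N : nat) (E : rel 'I_N) : 'M[R]_N :=
  \matrix_(i, j) (E j i)%:R.

Definition nedges (N : nat) (E : rel 'I_N) : nat :=
  #|[set p : 'I_N * 'I_N | E p.1 p.2]|.

Definition indeg (N : nat) (E : rel 'I_N) (i : 'I_N) : nat := #|[set j | E j i]|.
Definition outdeg (N : nat) (E : rel 'I_N) (j : 'I_N) : nat := #|[set i | E j i]|.

Definition kmax (N : nat) (E : rel 'I_N) : nat :=
  maxn (\max_(i < N) indeg E i) (\max_(j < N) outdeg E j).

(* Main.v *)
Require Import Defs.
From HB Require Import structures.
From mathcomp Require Import all_boot all_order all_algebra.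
From mathcomp Require Import classical_sets reals.
From mathcomp Require Import lra.
Import Order.TTheory GRing.Theory Num.Theory.
Local Open Scope ring_scope.

Lemma bsq (R : realType) (b : bool) : ((b%:R : R) ^+ 2) = b%:R.
Proof. by case: b; rewrite ?expr1n ?expr0n. Qed.

Lemma memE (T : finType) (f : T -> bool) i : (i \in [set i | f i]%classic) = f i.
Proof. by apply/idP/idP; rewrite in_setE. Qed.

Lemma sumE (R : realType) (T : finType) (f : T -> bool) :
  \sum_i ((f i)%:R : R) = (#|[set i | f i]%classic|)%:R.
Proof.
rewrite -sum1_card natr_sum [RHS]big_mkcond /=; apply: eq_bigr => i _.
by rewrite memE; case: (f i).
Qed.

Lemma vnorm_ge (R : realType) n (y : 'cV[R]_n) i : `|y i 0| <= vnorm y.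
Proof.
rewrite /vnorm -sqrtr_sqr ler_sqrt; last by apply: sumr_ge0 => j _; exact: sqr_ge0.
rewrite (bigD1 i) //= lerDl; apply: sumr_ge0 => j _; exact: sqr_ge0.
Qed.

Lemma unit_coord (R : realType) n (x : 'cV[R]_n) j : vnorm x = 1 -> `|x j 0| <= 1.
Proof.
rewrite /vnorm => h.
have s1 : \sum_(i < n) x i 0 ^+ 2 = 1.
  by rewrite -(@sqr_sqrtr _ (\sum_(i < n) x i 0 ^+ 2)) ?h ?expr1n //;
     apply: sumr_ge0 => k _; exact: sqr_ge0.
have : x j 0 ^+ 2 <= 1.
  rewrite -s1 (bigD1 j) //= lerDl; apply: sumr_ge0 => k _; exact: sqr_ge0.
rewrite -real_normK ?num_real //.
have := normr_ge0 (x j 0); set t := `|x j 0|; move=> t0 ht; nra.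
Qed.

Lemma spec_ge (R : realType) m n (A : 'M[R]_(m, n)) x :
  vnorm x = 1 -> vnorm (A *m x) <= specnorm A.
Proof.
move=> hx; apply: ub_le_sup; last by exists x.
exists (Num.sqrt (\sum_i (\sum_j `|A i j|) ^+ 2)) => _ [x' Hx' <-].
rewrite /vnorm ler_sqrt; last by apply: sumr_ge0 => i _; exact: sqr_ge0.
apply: ler_sum => i _; rewrite mxE -real_normK ?num_real //.
have h1 : `|\sum_j A i j * x' j 0| <= \sum_j `|A i j|.
  apply: le_trans (ler_norm_sum _ _ _) _; apply: ler_sum => j _.
  rewrite normrM; have := @unit_coord _ _ _ j Hx'; have := normr_ge0 (A i j);
  have := normr_ge0 (x' j 0); nra.
have := normr_ge0 (\sum_j A i j * x' j 0); nra.
Qed.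

Lemma sq_le (R : realType) (t s : R) : 0 <= t -> t <= s -> t ^+ 2 <= s ^+ 2.
Proof. move=> t0 h; nra. Qed.

Lemma sqrt_sq (R : realType) (k s : R) : 0 <= k -> Num.sqrt k <= s -> k <= s ^+ 2.
Proof.
move=> k0 h; rewrite -(sqr_sqrtr k0); apply: sq_le => //; exact: sqrtr_ge0.
Qed.

Theorem propositionS16 (R : realType) (N : nat) (E : rel 'I_N) :
  (1 <= nedges E)%N ->
  srank (adjmx R E) <= (nedges E)%:R / (kmax E)%:R.
Proof.
move=> hM.
have Hf : frob2 (adjmx R E) = (nedges E)%:R.
  rewrite /frob2 exchange_big /= pair_bigA /= /nedges -sumE.
  by apply: eq_bigr => p _; rewrite mxE bsq.
have [p0] : exists p, p \in [set p : 'I_N * 'I_N | E p.1 p.2]%classic.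
  exact/card_gt0P.
rewrite memE => Ep0.
have N0 : (0 < #|[pred j : 'I_N | true]|)%N by apply/card_gt0P; by exists p0.1.
have kpos : (0 < kmax E)%N.
  apply: (leq_trans _ (leq_maxr (\max_(i < N) indeg E i) _)).
  apply: (@leq_trans (outdeg E p0.1)); last exact: leq_bigmax.
  by apply/card_gt0P; exists p0.2; rewrite memE.
have Hk : (kmax E)%:R <= specnorm (adjmx R E) ^+ 2.
  move: kpos; rewrite /kmax.
  case: (leqP (\max_(i < N) indeg E i)%N (\max_(j < N) outdeg E j)%N) => h.
  - move=> _.
    have [j0 _ Hj0] := @eq_bigmax_cond _ [pred j : 'I_N | true] (outdeg E) N0.
    rewrite [X in X%:R]Hj0.
    pose x : 'cV[R]_N := \col_i (i == j0)%:R.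
    have hx : vnorm x = 1.
      rewrite /vnorm (bigD1 j0) //= big1 ?mxE ?eqxx ?expr1n ?addr0 ?sqrtr1 //.
      by move=> i /negPf hi; rewrite mxE hi expr0n.
    apply: sqrt_sq => //; apply: (le_trans _ (@spec_ge _ _ _ _ _ hx)).
    rewrite /vnorm ler_sqrt; last by apply: sumr_ge0 => i _; exact: sqr_ge0.
    rewrite /outdeg -sumE le_eqVlt; apply/orP; left; apply/eqP.
    apply: eq_bigr => i _; rewrite mxE (bigD1 j0) //= big1 ?addr0.
      by rewrite !mxE eqxx mulr1 bsq.
    by move=> j /negPf hj; rewrite !mxE hj mulr0.
  - move=> kp.
    have [i0 _ Hi0] := @eq_bigmax_cond _ [pred j : 'I_N | true] (indeg E) N0.
    have Hi1 : (\max_(i < N) indeg E i)%N = indeg E i0 := Hi0.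
    move: kp; rewrite Hi1 => kp.
    set k : R := (indeg E i0)%:R.
    have k0 : 0 < k by rewrite ltr0n.
    have sk0 : Num.sqrt k != 0 by rewrite sqrtr_eq0 -ltNge.
    have hk : \sum_j ((E j i0)%:R : R) = k by rewrite sumE.
    pose x : 'cV[R]_N := \col_j ((E j i0)%:R / Num.sqrt k).
    have hx : vnorm x = 1.
      rewrite /vnorm -sqrtr1; congr Num.sqrt.
      under eq_bigr do rewrite mxE expr_div_n bsq sqr_sqrtr ?ltW //.
      by rewrite -mulr_suml hk divff // gt_eqF.
    apply: sqrt_sq; first exact: ltW.
    apply: (le_trans _ (@spec_ge _ _ _ _ _ hx)); apply: (le_trans _ (@vnorm_ge _ _ _ i0)).
    rewrite le_eqVlt; apply/orP; left; apply/eqP.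
    rewrite mxE.
    under eq_bigr do rewrite !mxE mulrA -expr2 bsq.
    rewrite -mulr_suml hk ger0_norm; last by rewrite divr_ge0 ?sqrtr_ge0 // ltW.
    by rewrite -{2}(sqr_sqrtr (ltW k0)) expr2 mulfK.
rewrite /srank Hf; apply: ler_wpM2l => //.
have kp : 0 < ((kmax E)%:R : R) by rewrite ltr0n.
rewrite lef_pV2 ?posrE //; exact: lt_le_trans Hk.
Qed.
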